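(* Let $X$ be a proper $\mathrm{CAT}(0)$ space, and let $G$ be a group acting by isometries on $X$. Let $(g_n)_{n\in\mathbb N}$ be a sequence in $G$ that escapes every compact subspace of $X$. Then there exist a subsequence $(g_{\sigma(n)})_{n\in\mathbb N}$ and points $\xi^-,\xi^+\in\partial_\infty X$ such that for every $\xi\in(\partial_\infty X)^{\mathrm{vis}}\setminus\{\xi^-\}$, the sequence $(g_{\sigma(n)}\xi)_{n\in\mathbb N}$ converges to $\xi^+$.
   Context: $\partial_\infty X$ is the visual boundary with the visual topology. $(\partial_\infty X)^{\mathrm{vis}}$ is the set of visibility points: points $\xi\in\partial_\infty X$ such that every $\eta\in\partial_\infty X$ with $\eta\neq\xi$ can be joined to $\xi$ by a geodesic line in $X$. A sequence $(g_n)$ escapes every compact subspace of $X$ if for some (equivalently any) $x\in X$, $(g_nx)$ eventually leaves every compact subset of $X$. *)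

(* Defs.v *)
From Stdlib Require Import Reals Lra.
Open Scope R_scope.

Definition is_metric {X : Type} (d : X -> X -> R) : Prop :=
  (forall x y, d x y = 0 <-> x = y) /\
  (forall x y, d x y = d y x) /\
  (forall x y z, d x z <= d x y + d y z).

Definition mopen {X : Type} (d : X -> X -> R) (U : X -> Prop) : Prop :=
  forall x, U x -> exists r, 0 < r /\ forall y, d x y < r -> U y.

Definition mcompact {X : Type} (d : X -> X -> R) (K : X -> Prop) : Prop :=
  forall (I : Type) (U : I -> X -> Prop),
    (forall i, mopen d (U i)) ->
    (forall x, K x -> exists i, U i x) ->
    exists l : list I, forall x, K x -> exists i, List.In i l /\ U i x.

Definition proper_space {X : Type} (d : X -> X -> R) : Prop :=
  forall x r, mcompact d (fun y => d x y <= r).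

Definition geod_seg {X : Type} (d : X -> X -> R) (c : R -> X) (p q : X) : Prop :=
  c 0 = p /\ c (d p q) = q /\
  forall s t, 0 <= s <= d p q -> 0 <= t <= d p q -> d (c s) (c t) = Rabs (s - t).

Definition geodesic_space {X : Type} (d : X -> X -> R) : Prop :=
  forall p q, exists c, geod_seg d c p q.

Definition E2 := (R * R)%type.
Definition dE (P Q : E2) : R :=
  sqrt ((fst P - fst Q)^2 + (snd P - snd Q)^2).
(* The point of the Euclidean segment [P,Q] at distance s from P,
   where a = |P - Q| (if a = 0 this is P). *)
Definition segE (P Q : E2) (a s : R) : E2 :=
  (fst P + (s / a) * (fst Q - fst P), snd P + (s / a) * (snd Q - snd P)).

(* x is the point of the side c (from p to q) at parameter s, and xb is
   the corresponding point of the comparison side [P,Q]. *)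
Definition side_pt {X : Type} (d : X -> X -> R) (c : R -> X) (p q : X)
  (P Q : E2) (x : X) (xb : E2) : Prop :=
  exists s, 0 <= s <= d p q /\ x = c s /\ xb = segE P Q (d p q) s.

Definition CAT0_ineq {X : Type} (d : X -> X -> R) : Prop :=
  forall (p q r : X) (c1 c2 c3 : R -> X),
    geod_seg d c1 p q -> geod_seg d c2 q r -> geod_seg d c3 r p ->
    forall P Q Rr : E2,
      dE P Q = d p q -> dE Q Rr = d q r -> dE Rr P = d r p ->
      forall x y xb yb,
        (side_pt d c1 p q P Q x xb \/ side_pt d c2 q r Q Rr x xb \/
         side_pt d c3 r p Rr P x xb) ->
        (side_pt d c1 p q P Q y yb \/ side_pt d c2 q r Q Rr y yb \/
         side_pt d c3 r p Rr P y yb) ->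
        d x y <= dE xb yb.

Definition CAT0_space {X : Type} (d : X -> X -> R) : Prop :=
  is_metric d /\ geodesic_space d /\ CAT0_ineq d.

(** * Visual boundary: points are represented by geodesic rays,
    two rays representing the same point iff they are asymptotic. *)
Definition geod_ray {X : Type} (d : X -> X -> R) (c : R -> X) : Prop :=
  forall s t, 0 <= s -> 0 <= t -> d (c s) (c t) = Rabs (s - t).

Definition asymptotic {X : Type} (d : X -> X -> R) (c c' : R -> X) : Prop :=
  exists B, forall t, 0 <= t -> d (c t) (c' t) <= B.

Definition geod_line {X : Type} (d : X -> X -> R) (l : R -> X) : Prop :=
  forall s t, d (l s) (l t) = Rabs (s - t).

Definition visibility_pt {X : Type} (d : X -> X -> R) (xi : R -> X) : Prop :=
  forall eta, geod_ray d eta -> ~ asymptotic d eta xi ->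
    exists l, geod_line d l /\
      asymptotic d (fun t => l t) xi /\ asymptotic d (fun t => l (- t)) eta.

(* Convergence in the visual (cone) topology of a sequence of boundary points
   xs n to xi: for a basepoint x0, the basic neighbourhoods of xi are
   U(c, Rad, eps) = {eta | d(c_eta Rad, c Rad) < eps}, where c, c_eta are
   the rays from x0 representing xi, eta. (Topology independent of x0.) *)
Definition vis_conv {X : Type} (d : X -> X -> R)
  (xs : nat -> R -> X) (xi : R -> X) : Prop :=
  forall x0 Rad eps, 0 <= Rad -> 0 < eps ->
    exists N, forall n, (N <= n)%nat ->
      forall c c', geod_ray d c -> c 0 = x0 -> asymptotic d c (xs n) ->
                   geod_ray d c' -> c' 0 = x0 -> asymptotic d c' xi ->
                   d (c Rad) (c' Rad) < eps.

Definition is_group {G : Type} (mul : G -> G -> G) (e : G) (inv : G -> G) : Prop :=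
  (forall a b c, mul a (mul b c) = mul (mul a b) c) /\
  (forall a, mul e a = a /\ mul a e = a) /\
  (forall a, mul (inv a) a = e /\ mul a (inv a) = e).

Definition isometric_action {G X : Type} (mul : G -> G -> G) (e : G)
  (d : X -> X -> R) (act : G -> X -> X) : Prop :=
  (forall x, act e x = x) /\
  (forall g h x, act (mul g h) x = act g (act h x)) /\
  (forall g x y, d (act g x) (act g y) = d x y).

Definition escapes_compacts {G X : Type} (d : X -> X -> R) (act : G -> X -> X)
  (g : nat -> G) : Prop :=
  exists x, forall K, mcompact d K ->
    exists N, forall n, (N <= n)%nat -> ~ K (act (g n) x).

(* Main.v *)
Require Import Defs.
From Stdlib Require Import Reals Lra Lia Psatz Classical ClassicalEpsilon.
Open Scope R_scope.

Lemma d_refl {X} (d : X -> X -> R) (Hm : is_metric d) x : d x x = 0.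
Proof. destruct Hm as [H1 _]. apply H1. reflexivity. Qed.

Lemma d_sym {X} (d : X -> X -> R) (Hm : is_metric d) x y : d x y = d y x.
Proof. destruct Hm as [_ [H2 _]]. apply H2. Qed.

Lemma d_tri {X} (d : X -> X -> R) (Hm : is_metric d) x y z : d x z <= d x y + d y z.
Proof. destruct Hm as [_ [_ H3]]. apply H3. Qed.

Lemma d_nonneg {X} (d : X -> X -> R) (Hm : is_metric d) x y : 0 <= d x y.
Proof.
  pose proof (d_tri d Hm x y x). rewrite d_refl in H by auto.
  rewrite (d_sym d Hm y x) in H. lra.
Qed.

Lemma d_eq0 {X} (d : X -> X -> R) (Hm : is_metric d) x y : d x y = 0 -> x = y.
Proof. destruct Hm as [H1 _]. apply H1. Qed.

Lemma d_le0 {X} (d : X -> X -> R) (Hm : is_metric d) x y : d x y <= 0 -> x = y.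
Proof. intro. apply (d_eq0 d Hm). pose proof (d_nonneg d Hm x y). lra. Qed.

Lemma d_rev {X} (d : X -> X -> R) (Hm : is_metric d) x y z :
  d x y - d x z <= d y z.
Proof. pose proof (d_tri d Hm x z y). rewrite (d_sym d Hm z y) in H. lra. Qed.

Lemma seg_dist {X} (d : X -> X -> R) (Hm : is_metric d) c p q s :
  geod_seg d c p q -> 0 <= s <= d p q -> d p (c s) = s.
Proof.
  intros [H0 [H1 H2]] Hs. rewrite <- H0 at 1.
  rewrite H2; [|pose proof (d_nonneg d Hm p q); lra|lra].
  rewrite Rabs_left1; lra.
Qed.

Lemma seg_sub {X} (d : X -> X -> R) (Hm : is_metric d) c p q T :
  geod_seg d c p q -> 0 <= T <= d p q -> geod_seg d c p (c T).
Proof.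
  intros Hc HT. pose proof (seg_dist d Hm c p q T Hc HT) as E.
  destruct Hc as [H0 [H1 H2]]. split; [auto|split].
  - rewrite E. reflexivity.
  - rewrite E. intros s t Hs Ht. apply H2; lra.
Qed.

Lemma seg_rev {X} (d : X -> X -> R) (Hm : is_metric d) c p q :
  geod_seg d c p q -> geod_seg d (fun s => c (d p q - s)) q p.
Proof.
  intros [H0 [H1 H2]]. unfold geod_seg. rewrite (d_sym d Hm q p). split; [|split].
  - rewrite Rminus_0_r. auto.
  - replace (d p q - d p q) with 0 by ring. auto.
  - intros s t Hs Ht. rewrite H2 by lra. rewrite Rabs_minus_sym. f_equal. ring.
Qed.

Lemma ray_seg {X} (d : X -> X -> R) (Hm : is_metric d) c T :
  geod_ray d c -> 0 <= T -> geod_seg d c (c 0) (c T) /\ d (c 0) (c T) = T.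
Proof.
  intros Hc HT. assert (E : d (c 0) (c T) = T).
  { rewrite Hc by lra. rewrite Rabs_left1; lra. }
  split; [|auto]. split; [auto|split].
  - rewrite E. auto.
  - rewrite E. intros s t Hs Ht. apply Hc; lra.
Qed.

Lemma seg_iso {X} (d : X -> X -> R) (Hm : is_metric d) c p q f :
  (forall x y, d (f x) (f y) = d x y) ->
  geod_seg d c p q -> geod_seg d (fun s => f (c s)) (f p) (f q).
Proof.
  intros Hf [H0 [H1 H2]]. unfold geod_seg. rewrite Hf. split; [|split].
  - rewrite H0; auto.
  - rewrite H1; auto.
  - intros. rewrite Hf. auto.
Qed.

Lemma cmp2 {X} (d : X -> X -> R) (HX : CAT0_space d) p q r c1 c2 t1 t2 :
  geod_seg d c1 p q -> geod_seg d c2 p r ->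
  0 < d p q -> 0 < d p r -> 0 <= t1 <= d p q -> 0 <= t2 <= d p r ->
  (d (c1 t1) (c2 t2))^2 <=
   t1^2 + t2^2 - t1 * t2 * ((d p q)^2 + (d p r)^2 - (d q r)^2) / (d p q * d p r).
Proof.
  destruct HX as [Hm [Hg Hc]].
  intros Hc1 Hc2 Ha Hb Ht1 Ht2.
  set (a := d p q) in *. set (b := d p r) in *. set (e := d q r).
  destruct (Hg q r) as [c0 Hc0].
  pose proof (seg_rev d Hm c2 p r Hc2) as Hc3.
  set (u := (a^2 + b^2 - e^2) / (2*a)).
  assert (Htri1 : e <= a + b).
  { unfold e, a, b. pose proof (d_tri d Hm q p r). rewrite (d_sym d Hm q p) in H. lra. }
  assert (Htri2 : a <= b + e).
  { unfold e, a, b. pose proof (d_tri d Hm p r q). rewrite (d_sym d Hm r q) in H. lra. }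
  assert (Htri3 : b <= a + e).
  { unfold e, a, b. pose proof (d_tri d Hm p q r). lra. }
  assert (He : 0 <= e) by (apply d_nonneg; auto).
  assert (Hv : 0 <= b^2 - u^2).
  { unfold u. apply Rmult_le_reg_r with (r := (2*a)^2). nra.
    rewrite Rmult_0_l.
    replace ((b ^ 2 - ((a ^ 2 + b ^ 2 - e ^ 2) / (2 * a)) ^ 2) * (2 * a) ^ 2)
      with ((e^2 - (a-b)^2) * ((a+b)^2 - e^2)) by (field; lra).
    apply Rmult_le_pos; nra. }
  set (v := sqrt (b^2 - u^2)).
  assert (Hvv : v^2 = b^2 - u^2) by (unfold v; rewrite pow2_sqrt; auto).
  set (P := (0, 0) : E2). set (Q := (a, 0) : E2). set (Rr := (u, v) : E2).
  assert (EPQ : dE P Q = d p q).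
  { unfold dE, P, Q; cbn [fst snd]. fold a. replace ((0 - a) ^ 2 + (0 - 0) ^ 2) with (a^2) by ring.
    apply sqrt_pow2. lra. }
  assert (EQR : dE Q Rr = d q r).
  { unfold dE, Q, Rr; cbn [fst snd]. fold e.
    replace ((a - u) ^ 2 + (0 - v) ^ 2) with (e^2).
    apply sqrt_pow2. lra. rewrite <- Rsqr_pow2. unfold Rsqr.
    replace ((a - u) ^ 2 + (0 - v) ^ 2) with (a^2 - 2*a*u + u^2 + v^2) by ring.
    rewrite Hvv. unfold u. field. lra. }
  assert (ERP : dE Rr P = d r p).
  { unfold dE, Rr, P; cbn [fst snd]. rewrite (d_sym d Hm r p). fold b.
    replace ((u - 0) ^ 2 + (v - 0) ^ 2) with (b^2). apply sqrt_pow2. lra.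
    replace ((u - 0) ^ 2 + (v - 0) ^ 2) with (u^2 + v^2) by ring. rewrite Hvv. ring. }
  pose proof (Hc p q r c1 c0 (fun s => c2 (d p r - s)) Hc1 Hc0 Hc3 P Q Rr EPQ EQR ERP
     (c1 t1) (c2 t2) (segE P Q (d p q) t1) (segE Rr P (d r p) (d r p - t2))) as H.
  assert (Hle : d (c1 t1) (c2 t2) <= dE (segE P Q (d p q) t1) (segE Rr P (d r p) (d r p - t2))).
  { apply H.
    - left. exists t1. split; auto.
    - right; right. exists (d r p - t2). rewrite (d_sym d Hm r p). fold b.
      split; [lra|split; [|auto]]. f_equal. ring. }
  clear H.
  rewrite (d_sym d Hm r p) in Hle. fold a b in Hle.
  unfold dE, segE, P, Q, Rr in Hle; cbn [fst snd] in Hle.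
  set (Z := (0 + t1 / a * (a - 0) - (u + (b - t2) / b * (0 - u))) ^ 2 +
        (0 + t1 / a * (0 - 0) - (v + (b - t2) / b * (0 - v))) ^ 2) in Hle.
  assert (HZ : Z = t1^2 + t2^2 - t1 * t2 * (a^2 + b^2 - e^2) / (a * b)).
  { unfold Z. replace ((0 + t1 / a * (a - 0) - (u + (b - t2) / b * (0 - u))) ^ 2 +
        (0 + t1 / a * (0 - 0) - (v + (b - t2) / b * (0 - v))) ^ 2)
     with (t1^2 - 2 * t1 * t2 * u / b + t2^2 * (u^2 + v^2) / b^2) by (field; lra).
    rewrite Hvv. unfold u. field. lra. }
  assert (HZ0 : 0 <= Z) by (unfold Z; apply Rplus_le_le_0_compat; apply pow2_ge_0).
  rewrite <- HZ.
  pose proof (d_nonneg d Hm (c1 t1) (c2 t2)).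
  rewrite <- (pow2_sqrt Z HZ0).
  apply pow_incr. split; auto.
Qed.

Lemma nat_above (M : R) : exists N : nat, M < INR N.
Proof.
  destruct (Rle_or_lt M 0) as [H|H].
  - exists 1%nat. simpl. lra.
  - destruct (archimed_cor1 (/ M)) as [N [HN HN0]]. apply Rinv_0_lt_compat; auto.
    exists N. assert (0 < INR N) by (apply lt_0_INR; auto).
    rewrite <- (Rinv_inv M), <- (Rinv_inv (INR N)). apply Rinv_lt_contravar; auto.
    apply Rmult_lt_0_compat; apply Rinv_0_lt_compat; auto.
Qed.

Definition conv {X} (d : X -> X -> R) (u : nat -> X) (a : X) : Prop :=
  forall eps, 0 < eps -> exists N, forall n, (N <= n)%nat -> d (u n) a < eps.

Definition sincr (f : nat -> nat) : Prop := forall n, (f n < f (S n))%nat.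

Lemma sincr_ge f : sincr f -> forall n, (n <= f n)%nat.
Proof. intros H n. induction n. lia. specialize (H n). lia. Qed.

Lemma sincr_mono f : sincr f -> forall m n, (m <= n)%nat -> (f m <= f n)%nat.
Proof.
  intros H m n Hmn. induction Hmn. lia. specialize (H m0). lia.
Qed.

Lemma sincr_comp f h : sincr f -> sincr h -> sincr (fun n => f (h n)).
Proof.
  intros Hf Hh n. pose proof (Hh n).
  assert (forall m k, (m < k)%nat -> (f m < f k)%nat).
  { intros m k Hmk. induction Hmk. apply Hf. specialize (Hf m0). lia. }
  apply H0. auto.
Qed.

Lemma conv_sub {X} (d : X -> X -> R) u a f :
  sincr f -> conv d u a -> conv d (fun n => u (f n)) a.
Proof.
  intros Hf Hu eps He. destruct (Hu eps He) as [N HN]. exists N.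
  intros n Hn. apply HN. pose proof (sincr_ge f Hf n). lia.
Qed.

Lemma list_bound {A} (F : A -> nat) (l : list A) :
  exists N, forall i, List.In i l -> (F i <= N)%nat.
Proof.
  induction l as [|a l IH].
  - exists 0%nat. intros i [].
  - destruct IH as [N HN]. exists (Nat.max (F a) N). intros i [<-|Hi].
    + lia.
    + specialize (HN i Hi). lia.
Qed.

Lemma cluster {X} (d : X -> X -> R) (Hm : is_metric d) (Hprop : proper_space d)
  x r (u : nat -> X) : (forall n, d x (u n) <= r) ->
  exists a, forall eps, 0 < eps -> forall N, exists n, (N <= n)%nat /\ d a (u n) < eps.
Proof.
  intros Hu. apply NNPP. intro Hn.
  assert (H : forall a, exists p : R * nat, 0 < fst p /\
                forall n, (snd p <= n)%nat -> fst p <= d a (u n)).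
  { intro a. apply NNPP. intro Hc. apply Hn. exists a. intros eps He N.
    apply NNPP. intro Hc2. apply Hc. exists (eps, N). simpl. split; auto.
    intros n Hn'. apply Rnot_lt_le. intro Hl. apply Hc2. exists n. auto. }
  pose (F := fun a => proj1_sig (constructive_indefinite_description _ (H a))).
  assert (HF : forall a, 0 < fst (F a) /\
                forall n, (snd (F a) <= n)%nat -> fst (F a) <= d a (u n)).
  { intro a. unfold F. destruct (constructive_indefinite_description _ (H a)). auto. }
  destruct (Hprop x r X (fun a y => d a y < fst (F a))) as [l Hl].
  - intros a y Hy. exists (fst (F a) - d a y). split. lra.
    intros z Hz. pose proof (d_tri d Hm a y z). lra.
  - intros y _. exists y. rewrite d_refl by auto. apply HF.
  - destruct (list_bound (fun a => snd (F a)) l) as [N HN].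
    destruct (Hl (u N) (Hu N)) as [i [Hi Hi2]].
    pose proof (proj2 (HF i) N (HN i Hi)). lra.
Qed.

Lemma seq_compact {X} (d : X -> X -> R) (Hm : is_metric d) (Hprop : proper_space d)
  x r (u : nat -> X) : (forall n, d x (u n) <= r) ->
  exists f a, sincr f /\ conv d (fun n => u (f n)) a.
Proof.
  intros Hu. destruct (cluster d Hm Hprop x r u Hu) as [a Ha].
  assert (H : forall N k, exists n, (N <= n)%nat /\ d a (u n) < / INR (S k)).
  { intros N k. apply Ha. apply Rinv_0_lt_compat. apply lt_0_INR. lia. }
  pose (F := fun N k => proj1_sig (constructive_indefinite_description _ (H N k))).
  assert (HF : forall N k, (N <= F N k)%nat /\ d a (u (F N k)) < / INR (S k)).
  { intros N k. unfold F. destruct (constructive_indefinite_description _ (H N k)). auto. }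
  pose (phi := fix phi k := match k with 0 => F 0%nat 0%nat | S k => F (S (phi k)) (S k) end).
  exists phi, a. split.
  - intro n. simpl. pose proof (proj1 (HF (S (phi n)) (S n))). lia.
  - intros eps He. destruct (archimed_cor1 eps He) as [N [HN HN0]]. exists N.
    intros n Hn. rewrite (d_sym d Hm).
    assert (Hd : d a (u (phi n)) < / INR (S n)).
    { destruct n; simpl; apply HF. }
    eapply Rlt_le_trans. apply Hd. apply Rle_trans with (/ INR N); [|lra].
    apply Rinv_le_contravar. apply lt_0_INR; lia. apply le_INR. lia.
Qed.

Definition cauchy {X} (d : X -> X -> R) (u : nat -> X) : Prop :=
  forall eps, 0 < eps -> exists N, forall m n, (N <= m)%nat -> (N <= n)%nat -> d (u m) (u n) < eps.

Lemma complete {X} (d : X -> X -> R) (Hm : is_metric d) (Hprop : proper_space d)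
  (u : nat -> X) : cauchy d u -> exists a, conv d u a.
Proof.
  intros Hc. destruct (Hc 1) as [N0 HN0]. lra.
  destruct (seq_compact d Hm Hprop (u N0) 1 (fun n => u (n + N0)%nat)) as [f [a [Hf Ha]]].
  { intro n. apply Rlt_le. apply HN0; lia. }
  exists a. intros eps He.
  destruct (Hc (eps/2)) as [N1 HN1]. lra.
  destruct (Ha (eps/2)) as [N2 HN2]. lra.
  exists N1. intros n Hn.
  set (k := (N1 + N2)%nat).
  pose proof (sincr_ge f Hf k).
  pose proof (HN2 k ltac:(lia)). simpl in H0.
  pose proof (HN1 n (f k + N0)%nat Hn ltac:(lia)).
  pose proof (d_tri d Hm (u n) (u (f k + N0)%nat) a). lra.
Qed.

Lemma conv_unique {X} (d : X -> X -> R) (Hm : is_metric d) u a b :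
  conv d u a -> conv d u b -> a = b.
Proof.
  intros Ha Hb. apply (d_le0 d Hm). apply Rnot_lt_le. intro Hp.
  destruct (Ha (d a b / 2)) as [N1 H1]. lra.
  destruct (Hb (d a b / 2)) as [N2 H2]. lra.
  specialize (H1 (N1 + N2)%nat ltac:(lia)). specialize (H2 (N1 + N2)%nat ltac:(lia)).
  pose proof (d_tri d Hm a (u (N1 + N2)%nat) b). rewrite (d_sym d Hm a (u (N1 + N2)%nat)) in H. lra.
Qed.

Lemma conv_cauchy {X} (d : X -> X -> R) (Hm : is_metric d) u a :
  conv d u a -> cauchy d u.
Proof.
  intros Ha eps He. destruct (Ha (eps/2)) as [N HN]. lra. exists N.
  intros m n Hm' Hn. pose proof (HN m Hm'). pose proof (HN n Hn).
  pose proof (d_tri d Hm (u m) a (u n)). rewrite (d_sym d Hm a) in H1. lra.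
Qed.

Lemma diag {X} (d : X -> X -> R) (Hm : is_metric d) (Hprop : proper_space d)
  x (r : nat -> R) (f : nat -> nat -> X) : (forall k n, d x (f k n) <= r k) ->
  exists phi, sincr phi /\ forall k, exists L, conv d (fun n => f k (phi n)) L.
Proof.
  intros Hf.
  assert (Ext : forall k (psi : nat -> nat), exists psi', sincr psi' /\
              exists L, conv d (fun n => f k (psi (psi' n))) L).
  { intros k psi. destruct (seq_compact d Hm Hprop x (r k) (fun n => f k (psi n))) as [g [L [Hg HL]]].
    intro; apply Hf. exists g. split; auto. exists L; auto. }
  pose (E := fun k psi => proj1_sig (constructive_indefinite_description _ (Ext k psi))).
  assert (HE : forall k psi, sincr (E k psi) /\
            exists L, conv d (fun n => f k (psi (E k psi n))) L).
  { intros k psi. unfold E. destruct (constructive_indefinite_description _ (Ext k psi)). auto. }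
  pose (Psi := fix Psi k := match k with
           | 0 => E 0%nat (fun n => n)
           | S k => fun n => Psi k (E (S k) (Psi k) n) end).
  assert (HPs : forall k, sincr (Psi k)).
  { induction k; simpl. apply HE. apply sincr_comp; auto. apply HE. }
  assert (Hrel : forall k j, exists h, (forall i, (i <= h i)%nat) /\
                   forall i, Psi (j + k)%nat i = Psi k (h i)).
  { intros k j. induction j.
    - exists (fun i => i). split; auto.
    - destruct IHj as [h [Hh1 Hh2]]. exists (fun i => h (E (S (j + k)) (Psi (j + k)%nat) i)).
      split.
      + intro i. pose proof (sincr_ge _ (proj1 (HE (S (j + k)) (Psi (j + k)%nat))) i).
        specialize (Hh1 (E (S (j + k)) (Psi (j + k)%nat) i)). lia.
      + intro i. simpl. rewrite <- Hh2. reflexivity. }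
  exists (fun n => Psi n n). split.
  - intro n. simpl.
    pose proof (sincr_ge _ (proj1 (HE (S n) (Psi n))) (S n)).
    apply Nat.lt_le_trans with (Psi n (S n)). apply HPs.
    apply sincr_mono. apply HPs. lia.
  - intro k. assert (HL : exists L, conv d (fun n => f k (Psi k n)) L).
    { destruct k; simpl. destruct (proj2 (HE 0%nat (fun n => n))) as [L HL]. exists L; auto.
      destruct (proj2 (HE (S k) (Psi k))) as [L HL]. exists L. auto. }
    destruct HL as [L HL]. exists L. intros eps He. destruct (HL eps He) as [N HN].
    exists (N + k)%nat. intros n Hn.
    destruct (Hrel k (n - k)%nat) as [h [Hh1 Hh2]].
    replace (n - k + k)%nat with n in Hh2 by lia. rewrite Hh2.
    apply HN. specialize (Hh1 n). lia.
Qed.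

Lemma sq_le {x y : R} : 0 <= y -> x^2 <= y^2 -> x <= y.
Proof. intros. nra. Qed.

Lemma prop_lem {X} (d : X -> X -> R) (HX : CAT0_space d) p q r c1 c2 lam :
  geod_seg d c1 p q -> geod_seg d c2 p r -> 0 < d p q -> 0 < d p r -> 0 <= lam <= 1 ->
  d (c1 (lam * d p q)) (c2 (lam * d p r)) <= lam * d q r.
Proof.
  intros H1 H2 Ha Hb Hl.
  pose proof (cmp2 d HX p q r c1 c2 (lam * d p q) (lam * d p r) H1 H2 Ha Hb
                ltac:(split; nra) ltac:(split; nra)) as H.
  assert (Hm : is_metric d) by apply HX.
  apply sq_le. pose proof (d_nonneg d Hm q r). nra.
  eapply Rle_trans. apply H. right. field. lra.
Qed.

Lemma nat_big (M : R) : exists N : nat, forall n, (N <= n)%nat -> M <= INR n.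
Proof.
  destruct (nat_above M) as [N HN]. exists N. intros n Hn.
  apply le_INR in Hn. lra.
Qed.

Lemma limit_ray {X} (d : X -> X -> R) (HX : CAT0_space d) (Hprop : proper_space d)
  (sg : X -> X -> R -> X) (Hsg : forall p q, geod_seg d (sg p q) p q)
  x (z : nat -> X) (Hz : forall M, exists N, forall n, (N <= n)%nat -> M <= d x (z n)) :
  exists phi zeta, sincr phi /\ geod_ray d zeta /\ zeta 0 = x /\
    forall t, 0 <= t -> conv d (fun n => sg x (z (phi n)) t) (zeta t).
Proof.
  assert (Hm : is_metric d) by apply HX.
  set (f := fun (k n : nat) => sg x (z n) (Rmin (INR k) (d x (z n)))).
  destruct (diag d Hm Hprop x (fun k => INR k) f) as [phi [Hphi Hlim]].
  { intros k n. unfold f. rewrite (seg_dist d Hm _ x (z n)); auto.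
    apply Rmin_l. split. apply Rmin_glb. apply pos_INR. apply d_nonneg; auto. apply Rmin_r. }
  set (s := fun n => sg x (z (phi n))).
  assert (Hbig : forall M, exists N, forall n, (N <= n)%nat -> M <= d x (z (phi n))).
  { intro M. destruct (Hz M) as [N HN]. exists N. intros n Hn. apply HN.
    pose proof (sincr_ge phi Hphi n). lia. }
  assert (Hcau : forall t, 0 <= t -> cauchy d (fun n => s n t)).
  { intros t Ht eps He.
    destruct (nat_above (t + 1)) as [k Hk].
    destruct (Hlim k) as [L HL].
    destruct (conv_cauchy d Hm _ _ HL eps He) as [N1 HN1].
    destruct (Hbig (INR k)) as [N2 HN2].
    exists (N1 + N2)%nat. intros m n Hmm Hn.
    specialize (HN1 m n ltac:(lia) ltac:(lia)). unfold f in HN1.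
    pose proof (HN2 m ltac:(lia)). pose proof (HN2 n ltac:(lia)).
    rewrite Rmin_left in HN1 by auto. rewrite Rmin_left in HN1 by auto.
    set (K := INR k) in *.
    assert (HK : 0 < K) by lra.
    pose proof (seg_sub d Hm (s m) x (z (phi m)) K (Hsg _ _) ltac:(lra)) as Sm.
    pose proof (seg_sub d Hm (s n) x (z (phi n)) K (Hsg _ _) ltac:(lra)) as Sn.
    pose proof (seg_dist d Hm (s m) x (z (phi m)) K (Hsg _ _) ltac:(lra)) as Dm.
    pose proof (seg_dist d Hm (s n) x (z (phi n)) K (Hsg _ _) ltac:(lra)) as Dn.
    pose proof (prop_lem d HX x _ _ (s m) (s n) (t / K) Sm Sn ltac:(lra) ltac:(lra)) as P.
    rewrite Dm, Dn in P.
    replace (t / K * K) with t in P by (field; lra).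
    assert (Hl : 0 <= t / K <= 1).
    { split. apply Rmult_le_pos; auto. left; apply Rinv_0_lt_compat; auto.
      apply Rmult_le_reg_r with K; auto. replace (t / K * K) with t by (field; lra). lra. }
    specialize (P Hl). unfold s in P.
    pose proof (d_nonneg d Hm (sg x (z (phi m)) K) (sg x (z (phi n)) K)).
    assert (Q : t / K * d (sg x (z (phi m)) K) (sg x (z (phi n)) K) <=
                d (sg x (z (phi m)) K) (sg x (z (phi n)) K)).
    { rewrite <- (Rmult_1_l (d (sg x (z (phi m)) K) (sg x (z (phi n)) K))) at 2.
      apply Rmult_le_compat_r; lra. }
    cbv beta. unfold s. lra. }
  assert (Hex : forall t, exists y, 0 <= t -> conv d (fun n => s n t) y).
  { intro t. destruct (Rle_or_lt 0 t) as [Ht|Ht].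
    - destruct (complete d Hm Hprop _ (Hcau t Ht)) as [y Hy]. exists y; auto.
    - exists x. intro; lra. }
  pose (zeta := fun t => proj1_sig (constructive_indefinite_description _ (Hex t))).
  assert (Hzeta : forall t, 0 <= t -> conv d (fun n => s n t) (zeta t)).
  { intro t. unfold zeta. destruct (constructive_indefinite_description _ (Hex t)). auto. }
  exists phi, zeta. split; [auto|split; [|split]].
  - intros a b Ha Hb. apply Rle_antisym.
    + apply Rnot_lt_le. intro Hc.
      set (eps := (d (zeta a) (zeta b) - Rabs (a - b)) / 2).
      destruct (Hzeta a Ha eps ltac:(unfold eps; lra)) as [N1 H1].
      destruct (Hzeta b Hb eps ltac:(unfold eps; lra)) as [N2 H2].
      destruct (Hbig (Rmax a b)) as [N3 H3].
      set (n := (N1 + N2 + N3)%nat).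
      specialize (H1 n ltac:(lia)). specialize (H2 n ltac:(lia)). specialize (H3 n ltac:(lia)).
      destruct (Hsg x (z (phi n))) as [_ [_ Hs]].
      assert (E : d (s n a) (s n b) = Rabs (a - b)).
      { apply Hs. split; auto. pose proof (Rmax_l a b); lra. split; auto. pose proof (Rmax_r a b); lra. }
      pose proof (d_tri d Hm (zeta a) (s n a) (zeta b)).
      pose proof (d_tri d Hm (s n a) (s n b) (zeta b)).
      rewrite (d_sym d Hm (zeta a) (s n a)) in H. cbv beta in H1, H2. unfold eps in *. lra.
    + apply Rnot_lt_le. intro Hc.
      set (eps := (Rabs (a - b) - d (zeta a) (zeta b)) / 2).
      destruct (Hzeta a Ha eps ltac:(unfold eps; lra)) as [N1 H1].
      destruct (Hzeta b Hb eps ltac:(unfold eps; lra)) as [N2 H2].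
      destruct (Hbig (Rmax a b)) as [N3 H3].
      set (n := (N1 + N2 + N3)%nat).
      specialize (H1 n ltac:(lia)). specialize (H2 n ltac:(lia)). specialize (H3 n ltac:(lia)).
      destruct (Hsg x (z (phi n))) as [_ [_ Hs]].
      assert (E : d (s n a) (s n b) = Rabs (a - b)).
      { apply Hs. split; auto. pose proof (Rmax_l a b); lra. split; auto. pose proof (Rmax_r a b); lra. }
      pose proof (d_tri d Hm (s n a) (zeta a) (s n b)).
      pose proof (d_tri d Hm (zeta a) (zeta b) (s n b)).
      rewrite (d_sym d Hm (zeta b) (s n b)) in H0. cbv beta in H1, H2. unfold eps in *. lra.
  - apply (conv_unique d Hm (fun n => s n 0)).
    + apply Hzeta. lra.
    + intros eps He. exists 0%nat. intros n _. unfold s.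
      destruct (Hsg x (z (phi n))) as [E _]. rewrite E, d_refl by auto. auto.
  - intros t Ht. apply Hzeta. auto.
Qed.

Lemma Rabs_le_inv a b : Rabs a <= b -> - b <= a <= b.
Proof. intros. split_Rabs; lra. Qed.

Lemma seg_pts {X} (d : X -> X -> R) c p q s t :
  geod_seg d c p q -> 0 <= s <= d p q -> 0 <= t <= d p q -> d (c s) (c t) = Rabs (s - t).
Proof. intros [_ [_ H]] Hs Ht. apply H; auto. Qed.

Lemma asym_bound_nonneg {X} (d : X -> X -> R) (Hm : is_metric d) c1 c2 B :
  (forall t, 0 <= t -> d (c1 t) (c2 t) <= B) -> 0 <= B.
Proof. intro H. pose proof (H 0 (Rle_refl 0)). pose proof (d_nonneg d Hm (c1 0) (c2 0)). lra. Qed.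

Lemma ray_unique {X} (d : X -> X -> R) (HX : CAT0_space d) c1 c2 :
  geod_ray d c1 -> geod_ray d c2 -> c1 0 = c2 0 -> asymptotic d c1 c2 ->
  forall R, 0 <= R -> c1 R = c2 R.
Proof.
  assert (Hm : is_metric d) by apply HX.
  intros H1 H2 H0 [B HB] R HR.
  pose proof (asym_bound_nonneg d Hm _ _ B HB) as HB0.
  destruct (Req_dec R 0) as [->|HR0]; auto.
  apply (d_le0 d Hm). apply Rnot_lt_le. intro Hdd.
  set (dd := d (c1 R) (c2 R)) in *.
  set (w := R * B / dd).
  assert (Hw : w * dd = R * B) by (unfold w; field; lra).
  assert (Hw0 : 0 <= w) by (unfold w; apply Rmult_le_pos; [nra| left; apply Rinv_0_lt_compat; lra]).
  set (T := R + 1 + 2 * w).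
  destruct (ray_seg d Hm c1 T H1 ltac:(unfold T; lra)) as [S1 D1].
  destruct (ray_seg d Hm c2 T H2 ltac:(unfold T; lra)) as [S2 D2].
  rewrite <- H0 in S2, D2.
  pose proof (prop_lem d HX (c1 0) (c1 T) (c2 T) c1 c2 (R / T) S1 S2
     ltac:(rewrite D1; unfold T; lra) ltac:(rewrite D2; unfold T; lra)) as P.
  rewrite D1, D2 in P. replace (R / T * T) with R in P by (field; unfold T; lra).
  assert (Hl : 0 <= R / T <= 1).
  { split. apply Rmult_le_pos; [lra| left; apply Rinv_0_lt_compat; unfold T; lra].
    apply Rmult_le_reg_r with T. unfold T; lra. replace (R / T * T) with R by (field; unfold T; lra). unfold T; lra. }
  specialize (P Hl). fold dd in P.
  pose proof (HB T ltac:(unfold T; lra)).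
  set (lam := R / T) in *.
  assert (Hlam : lam * T = R) by (unfold lam; field; unfold T; lra).
  assert (dd <= lam * B) by nra.
  assert (dd * T <= lam * B * T) by (apply Rmult_le_compat_r; unfold T; lra).
  assert (dd * T <= R * B) by (rewrite <- Hlam; lra).
  assert (T <= w) by (apply Rmult_le_reg_r with dd; lra).
  unfold T in *. lra.
Qed.

Lemma basechange {X} (d : X -> X -> R) (HX : CAT0_space d)
  (sg : X -> X -> R -> X) (Hsg : forall p q, geod_seg d (sg p q) p q)
  x x0 zeta (Hzr : geod_ray d zeta) (Hz0 : zeta 0 = x)
  (z w : nat -> X) D (HD : forall n, d (z n) (w n) <= D)
  (Hz : forall M, exists N, forall n, (N <= n)%nat -> M <= d x (z n))
  (Hconv : forall t, 0 <= t -> conv d (fun n => sg x (z n) t) (zeta t))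
  c' (Hc' : geod_ray d c') (Hc0 : c' 0 = x0) (Has : asymptotic d c' zeta)
  (tau : nat -> R -> X) (Htau : forall n, geod_seg d (tau n) x0 (w n)) :
  forall R, 0 <= R -> conv d (fun n => tau n R) (c' R).
Proof.
  assert (Hm : is_metric d) by apply HX.
  intros R HR eps He.
  destruct (Req_dec R 0) as [->|HR0].
  { exists 0%nat. intros n _. destruct (Htau n) as [E _]. rewrite E, Hc0, d_refl; auto. }
  destruct Has as [B HB].
  pose proof (asym_bound_nonneg d Hm _ _ B HB) as HB0.
  set (delta := d x x0).
  assert (Hdel : 0 <= delta) by (apply d_nonneg; auto).
  pose proof (d_nonneg d Hm (z 0%nat) (w 0%nat)).
  assert (HD0 : 0 <= D) by (pose proof (HD 0%nat); lra).
  set (K := B + 1 + 2 * delta).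
  set (T := R + 1 + 2 * R * K / eps).
  assert (HTK : R * K < eps / 2 * T).
  { unfold T. replace (eps / 2 * (R + 1 + 2 * R * K / eps)) with (eps/2 * (R + 1) + R * K)
      by (field; lra). nra. }
  assert (HT : R < T).
  { unfold T. assert (0 <= 2 * R * K / eps). apply Rmult_le_pos. unfold K; nra.
    left; apply Rinv_0_lt_compat; lra. lra. }
  destruct (Hconv T ltac:(lra) 1 ltac:(lra)) as [N1 HN1].
  destruct (Hz (T + R + 2 * delta + D + 1 + 4 * R * D / eps)) as [N2 HN2].
  exists (N1 + N2)%nat. intros n Hn.
  specialize (HN1 n ltac:(lia)). specialize (HN2 n ltac:(lia)). cbv beta in HN1.
  assert (H4 : 0 <= 4 * R * D / eps).
  { apply Rmult_le_pos. nra. left; apply Rinv_0_lt_compat; lra. }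
  set (sig := sg x (z n)) in *. set (mu := sg x0 (z n)).
  set (L := d x (z n)) in *. set (M := d x0 (z n)). set (W := d x0 (w n)).
  set (Dn := d (z n) (w n)).
  assert (HDn : Dn <= D) by apply HD.
  assert (HML : Rabs (M - L) <= delta).
  { unfold M, L, delta. apply Rabs_le. pose proof (d_tri d Hm x x0 (z n)).
    pose proof (d_tri d Hm x0 x (z n)). rewrite (d_sym d Hm x0 x) in H1. lra. }
  assert (HWM : Rabs (W - M) <= Dn).
  { unfold W, M, Dn. apply Rabs_le. pose proof (d_tri d Hm x0 (z n) (w n)).
    pose proof (d_tri d Hm x0 (w n) (z n)). rewrite (d_sym d Hm (w n) (z n)) in H1. lra. }
  apply Rabs_le_inv in HML. apply Rabs_le_inv in HWM.
  assert (HL0 : 0 < L) by lra.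
  pose proof (seg_rev d Hm sig x (z n) (Hsg _ _)) as Rs.
  pose proof (seg_rev d Hm mu x0 (z n) (Hsg _ _)) as Rm.
  set (lam1 := (L - T) / L).
  assert (Hl1 : 0 <= lam1 <= 1).
  { unfold lam1. split. apply Rmult_le_pos. lra. left; apply Rinv_0_lt_compat; lra.
    apply Rmult_le_reg_r with L; auto. replace ((L - T) / L * L) with (L - T) by (field; lra). lra. }
  assert (Hl1L : lam1 * L = L - T) by (unfold lam1; field; lra).
  pose proof (prop_lem d HX (z n) x x0 _ _ lam1 Rs Rm) as P1.
  rewrite (d_sym d Hm (z n) x), (d_sym d Hm (z n) x0) in P1.
  fold L M delta in P1. specialize (P1 ltac:(lra) ltac:(lra) Hl1).
  replace (L - lam1 * L) with T in P1 by lra.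
  set (T' := M - lam1 * M) in P1.
  assert (HT'1 : T' * L = M * T) by (unfold T'; nra).
  assert (HT'2 : 0 < T' <= M).
  { split; [|unfold T'; nra]. apply Rmult_lt_reg_r with L; auto. nra. }
  assert (HT'3 : Rabs (T' - T) <= delta).
  { apply Rabs_le. assert ((T' - T) * L = (M - L) * T) by nra. split.
    - apply Rmult_le_reg_r with L; auto. nra.
    - apply Rmult_le_reg_r with L; auto. nra. }
  apply Rabs_le_inv in HT'3.
  assert (S1 : d (sig T) (mu T') <= delta) by nra.
  destruct (ray_seg d Hm c' T Hc' ltac:(lra)) as [Sc Dc]. rewrite Hc0 in Sc, Dc.
  pose proof (seg_sub d Hm mu x0 (z n) T' (Hsg _ _) ltac:(fold M; lra)) as Smu.
  pose proof (seg_dist d Hm mu x0 (z n) T' (Hsg _ _) ltac:(fold M; lra)) as Dmu.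
  set (lam2 := R / T).
  assert (Hl2 : 0 <= lam2 <= 1).
  { unfold lam2. split. apply Rmult_le_pos. lra. left; apply Rinv_0_lt_compat; lra.
    apply Rmult_le_reg_r with T; [lra|]. replace (R / T * T) with R by (field; lra). lra. }
  assert (Hl2T : lam2 * T = R) by (unfold lam2; field; lra).
  pose proof (prop_lem d HX x0 (c' T) (mu T') c' mu lam2 Sc Smu) as P2.
  rewrite Dc, Dmu in P2. specialize (P2 ltac:(lra) ltac:(lra) Hl2).
  rewrite Hl2T in P2.
  assert (E2 : d (c' T) (mu T') <= B + 1 + delta).
  { pose proof (d_tri d Hm (c' T) (zeta T) (mu T')) as Q1.
    pose proof (d_tri d Hm (zeta T) (sig T) (mu T')) as Q2.
    pose proof (HB T ltac:(lra)) as Q3. rewrite (d_sym d Hm (zeta T) (sig T)) in Q2. lra. }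
  assert (E3 : d (mu (lam2 * T')) (mu R) <= lam2 * delta).
  { rewrite (seg_pts d mu x0 (z n) _ _ (Hsg _ _)). fold M.
    rewrite <- Hl2T. replace (lam2 * T' - lam2 * T) with (lam2 * (T' - T)) by ring.
    rewrite Rabs_mult, Rabs_pos_eq by lra. apply Rmult_le_compat_l. lra.
    apply Rabs_le. lra. fold M. split. apply Rmult_le_pos; lra.
    apply Rle_trans with T'; [|lra]. rewrite <- (Rmult_1_l T') at 2; apply Rmult_le_compat_r; lra.
    fold M. lra. }
  assert (St2 : d (c' R) (mu R) <= lam2 * K).
  { pose proof (d_tri d Hm (c' R) (mu (lam2 * T')) (mu R)). unfold K. nra. }
  set (lam3 := R / M).
  assert (HM0 : 0 < M) by lra.
  assert (Hl3 : 0 <= lam3 <= 1).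
  { unfold lam3. split. apply Rmult_le_pos. lra. left; apply Rinv_0_lt_compat; lra.
    apply Rmult_le_reg_r with M; [lra|]. replace (R / M * M) with R by (field; lra). lra. }
  assert (Hl3M : lam3 * M = R) by (unfold lam3; field; lra).
  pose proof (prop_lem d HX x0 (z n) (w n) mu (tau n) lam3 (Hsg _ _) (Htau n)) as P3.
  fold M W Dn in P3. specialize (P3 ltac:(lra) ltac:(lra) Hl3). rewrite Hl3M in P3.
  assert (E4 : d (tau n (lam3 * W)) (tau n R) <= lam3 * D).
  { rewrite (seg_pts d (tau n) x0 (w n) _ _ (Htau n)). fold W.
    rewrite <- Hl3M. replace (lam3 * W - lam3 * M) with (lam3 * (W - M)) by ring.
    rewrite Rabs_mult, Rabs_pos_eq by lra. apply Rmult_le_compat_l. lra.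
    apply Rabs_le. lra. fold W. split. apply Rmult_le_pos; lra.
    rewrite <- (Rmult_1_l W) at 2; apply Rmult_le_compat_r; lra.
    fold W. lra. }
  assert (St3 : d (mu R) (tau n R) <= 2 * lam3 * D).
  { pose proof (d_tri d Hm (mu R) (tau n (lam3 * W)) (tau n R)). nra. }
  assert (F1 : lam2 * K < eps / 2).
  { apply Rmult_lt_reg_r with T. lra. rewrite Rmult_assoc, (Rmult_comm K), <- Rmult_assoc, Hl2T. lra. }
  assert (F2 : 2 * lam3 * D < eps / 2).
  { apply Rmult_lt_reg_r with M. lra.
    replace (2 * lam3 * D * M) with (2 * D * (lam3 * M)) by ring. rewrite Hl3M.
    assert (4 * R * D / eps * eps = 4 * R * D) by (field; lra).
    assert (M >= 4 * R * D / eps + 1) by lra. nra. }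
  cbv beta. pose proof (d_tri d Hm (tau n R) (mu R) (c' R)).
  rewrite (d_sym d Hm (tau n R) (mu R)), (d_sym d Hm (mu R) (c' R)) in H0. lra.
Qed.

Lemma ray_to_segs {X} (d : X -> X -> R) (HX : CAT0_space d) rho y l1 B
  (Hr : geod_ray d rho) (Hr0 : rho 0 = y) (Hl : geod_ray d l1)
  (HB : forall t, 0 <= t -> d (rho t) (l1 t) <= B)
  (gam : R -> R -> X) (Hg : forall s, geod_seg d (gam s) y (l1 s)) R s :
  0 <= R -> R + B + 1 <= s -> d (rho R) (gam s R) <= 2 * (R / s) * B.
Proof.
  assert (Hm : is_metric d) by apply HX.
  intros HR Hs.
  pose proof (asym_bound_nonneg d Hm _ _ B HB) as HB0.
  destruct (ray_seg d Hm rho s Hr ltac:(lra)) as [S1 D1]. rewrite Hr0 in S1, D1.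
  set (Ls := d y (l1 s)).
  assert (HLs : - B <= Ls - s <= B).
  { pose proof (HB s ltac:(lra)). unfold Ls. pose proof (d_tri d Hm y (rho s) (l1 s)).
    pose proof (d_tri d Hm y (l1 s) (rho s)). rewrite (d_sym d Hm (l1 s) (rho s)) in H1. lra. }
  set (lam := R / s).
  assert (Hl1 : 0 <= lam <= 1).
  { unfold lam. split. apply Rmult_le_pos. lra. left; apply Rinv_0_lt_compat; lra.
    apply Rmult_le_reg_r with s; [lra|]. replace (R / s * s) with R by (field; lra). lra. }
  assert (Hls : lam * s = R) by (unfold lam; field; lra).
  pose proof (prop_lem d HX y (rho s) (l1 s) rho (gam s) lam S1 (Hg s)) as P.
  rewrite D1 in P. fold Ls in P. specialize (P ltac:(lra) ltac:(lra) Hl1). rewrite Hls in P.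
  assert (E : d (gam s (lam * Ls)) (gam s R) <= lam * B).
  { rewrite (seg_pts d (gam s) y (l1 s) _ _ (Hg s)). fold Ls.
    rewrite <- Hls. replace (lam * Ls - lam * s) with (lam * (Ls - s)) by ring.
    rewrite Rabs_mult, Rabs_pos_eq by lra. apply Rmult_le_compat_l. lra.
    apply Rabs_le. lra. fold Ls. split. apply Rmult_le_pos; lra.
    rewrite <- (Rmult_1_l Ls) at 2; apply Rmult_le_compat_r; lra.
    fold Ls. lra. }
  pose proof (HB s ltac:(lra)).
  assert (lam * d (rho s) (l1 s) <= lam * B) by (apply Rmult_le_compat_l; lra).
  pose proof (d_tri d Hm (rho R) (gam s (lam * Ls)) (gam s R)). lra.
Qed.

Lemma line_seg {X} (d : X -> X -> R) (Hm : is_metric d) l s :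
  geod_line d l -> 0 <= s -> geod_seg d l (l 0) (l s) /\ d (l 0) (l s) = s.
Proof.
  intros Hl Hs. assert (E : d (l 0) (l s) = s).
  { rewrite Hl. rewrite Rabs_left1; lra. }
  split; auto. split; [auto|split]. rewrite E; auto.
  intros. apply Hl.
Qed.

Lemma gromov {X} (d : X -> X -> R) (HX : CAT0_space d) l (Hl : geod_line d l)
  y sig (Hs : geod_seg d sig (l 0) y) t s :
  0 < t -> t <= d (l 0) y -> t <= s ->
  d (l 0) y + s - 4 * d (l 0) y * d (sig t) (l (- t)) / t <= d y (l s).
Proof.
  assert (Hm : is_metric d) by apply HX.
  intros Ht Hta Hts.
  destruct (line_seg d Hm l s Hl ltac:(lra)) as [Sl Dl].
  pose proof (cmp2 d HX (l 0) y (l s) sig l t t Hs Sl ltac:(lra) ltac:(lra) ltac:(lra) ltac:(lra)) as C.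
  rewrite Dl in C.
  set (a := d (l 0) y) in *. set (e := d y (l s)) in *.
  set (del := d (sig t) (l (- t))).
  assert (Hdel0 : 0 <= del) by (apply d_nonneg; auto).
  assert (He0 : 0 <= e) by (apply d_nonneg; auto).
  assert (Hes : s - a <= e).
  { unfold e, a. pose proof (d_tri d Hm (l 0) y (l s)). lra. }
  set (u := del / t).
  assert (Hu : u * t = del) by (unfold u; field; lra).
  assert (Hu0 : 0 <= u) by (unfold u; apply Rmult_le_pos; [lra| left; apply Rinv_0_lt_compat; lra]).
  replace (4 * a * del / t) with (4 * a * u) by (unfold u; field; lra).
  destruct (Rle_or_lt 2 u) as [Hu2|Hu2].
  { assert (4 * a * u >= 8 * a) by nra. lra. }
  assert (HD : 2 * t - del <= d (sig t) (l t)).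
  { pose proof (d_tri d Hm (l (- t)) (sig t) (l t)).
    rewrite Hl in H. rewrite Rabs_left1 in H by lra. rewrite (d_sym d Hm (l (-t)) (sig t)) in H.
    fold del in H. lra. }
  set (k := (a ^ 2 + s ^ 2 - e ^ 2) / (a * s)).
  assert (Hk : k * (a * s) = a ^ 2 + s ^ 2 - e ^ 2) by (unfold k; field; lra).
  replace (t * t * (a ^ 2 + s ^ 2 - e ^ 2) / (a * s)) with (t * t * k) in C by (unfold k; field; lra).
  assert (H1 : (2 * t - del) ^ 2 <= t ^ 2 + t ^ 2 - t * t * k).
  { eapply Rle_trans; [|apply C]. apply pow_incr. split; [nra|auto]. }
  rewrite <- Hu in H1.
  assert (H2 : (2 - u) ^ 2 <= 2 - k).
  { apply Rmult_le_reg_r with (t^2). nra. nra. }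
  assert (H3 : e ^ 2 >= (a + s) ^ 2 - 4 * a * s * u).
  { assert (k * (a * s) <= (2 - (2 - u)^2) * (a * s)) by (apply Rmult_le_compat_r; nra).
    assert (0 <= u^2*(a*s)) by (apply Rmult_le_pos; nra). nra. }
  apply Rnot_lt_le. intro Hc.
  assert (Hpos : 0 < a + s - 4 * a * u) by lra.
  assert (e ^ 2 < (a + s - 4 * a * u) ^ 2) by nra.
  assert (8 * a * a * u + 4 * a * s * u < 16 * a * a * u * u) by nra.
  assert (0 < u).
  { destruct (Req_dec u 0) as [E|E]. rewrite E in H0. lra. lra. }
  assert (2 * a + s < 4 * a * u).
  { apply Rmult_lt_reg_r with (4 * a * u). nra. nra. }
  lra.
Qed.

Lemma final_cmp {X} (d : X -> X -> R) (HX : CAT0_space d) y p ls tau gam R eta :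
  geod_seg d tau y p -> geod_seg d gam y ls -> 0 < d y p -> 0 < d y ls ->
  0 <= R <= d y p -> R <= d y ls -> 0 <= eta <= 1 ->
  d y p + d p ls - eta * d y p <= d y ls ->
  (d (tau R) (gam R)) ^ 2 <= 2 * eta * R ^ 2.
Proof.
  assert (Hm : is_metric d) by apply HX.
  intros Ht Hg Ha Hb HR HRb Heta Hbnd.
  pose proof (cmp2 d HX y p ls tau gam R R Ht Hg Ha Hb HR ltac:(lra)) as C.
  set (a := d y p) in *. set (b := d y ls) in *. set (s := d p ls) in *.
  assert (Hb1 : b <= a + s) by (unfold a, b, s; apply d_tri; auto).
  assert (Hs0 : 0 <= s) by (apply d_nonneg; auto).
  assert (Hb2 : a <= b + s).
  { unfold a, b, s. pose proof (d_tri d Hm y ls p). rewrite (d_sym d Hm ls p) in H. lra. }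
  assert (Key : s ^ 2 - (a - b) ^ 2 <= 2 * eta * a * b).
  { replace (s ^ 2 - (a - b) ^ 2) with ((s - b + a) * (s + b - a)) by ring.
    assert (eta * a <= a) by nra.
    assert (s + b - a <= 2 * b) by lra.
    destruct (Rle_or_lt (s - b + a) 0).
    - assert (0 <= s + b - a) by lra. nra.
    - assert (s - b + a <= eta * a) by lra.
      assert (0 <= s + b - a) by lra. nra. }
  eapply Rle_trans. apply C.
  replace (R ^ 2 + R ^ 2 - R * R * (a ^ 2 + b ^ 2 - s ^ 2) / (a * b))
    with (R ^ 2 * (s ^ 2 - (a - b) ^ 2) / (a * b)) by (field; lra).
  apply Rmult_le_reg_r with (a * b). nra.
  replace (R ^ 2 * (s ^ 2 - (a - b) ^ 2) / (a * b) * (a * b)) with (R ^ 2 * (s ^ 2 - (a - b) ^ 2)) by (field; lra).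
  replace (2 * eta * R ^ 2 * (a * b)) with (R ^ 2 * (2 * eta * a * b)) by ring.
  apply Rmult_le_compat_l. nra. auto.
Qed.

Lemma asym_sym {X} (d : X -> X -> R) (Hm : is_metric d) c1 c2 :
  asymptotic d c1 c2 -> asymptotic d c2 c1.
Proof. intros [B HB]. exists B. intros t Ht. rewrite d_sym by auto. auto. Qed.

Lemma asym_trans {X} (d : X -> X -> R) (Hm : is_metric d) c1 c2 c3 :
  asymptotic d c1 c2 -> asymptotic d c2 c3 -> asymptotic d c1 c3.
Proof.
  intros [B1 H1] [B2 H2]. exists (B1 + B2). intros t Ht.
  pose proof (d_tri d Hm (c1 t) (c2 t) (c3 t)). pose proof (H1 t Ht). pose proof (H2 t Ht). lra.
Qed.

Lemma line_ray {X} (d : X -> X -> R) l : geod_line d l -> geod_ray d l.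
Proof. intros H s t _ _. apply H. Qed.

Lemma line_neg_ray {X} (d : X -> X -> R) l : geod_line d l -> geod_ray d (fun t => l (- t)).
Proof. intros H s t _ _. rewrite H. replace (- s - - t) with (- (s - t)) by ring. apply Rabs_Ropp. Qed.

Theorem lemma2p8 (X : Type) (d : X -> X -> R)
  (HX : CAT0_space d) (Hprop : proper_space d)
  (G : Type) (mul : G -> G -> G) (e : G) (inv : G -> G)
  (HG : is_group mul e inv) (act : G -> X -> X)
  (Hact : isometric_action mul e d act)
  (g : nat -> G) (Hesc : escapes_compacts d act g) :
  exists (sigma : nat -> nat) (xim xip : R -> X),
    (forall n, (sigma n < sigma (S n))%nat) /\
    geod_ray d xim /\ geod_ray d xip /\
    forall xi, geod_ray d xi -> visibility_pt d xi -> ~ asymptotic d xi xim ->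
      vis_conv d (fun n t => act (g (sigma n)) (xi t)) xip.
Proof.
  assert (Hm : is_metric d) by apply HX.
  destruct Hact as [Hae [Hamul Hiso]]. destruct HG as [Hass [Hid Hinv]].
  assert (AL : forall h z, act (inv h) (act h z) = z).
  { intros h z. rewrite <- Hamul. rewrite (proj1 (Hinv h)). apply Hae. }
  assert (AR : forall h z, act h (act (inv h) z) = z).
  { intros h z. rewrite <- Hamul. rewrite (proj2 (Hinv h)). apply Hae. }
  assert (Hgeo : geodesic_space d) by apply HX.
  pose (sg := fun p q => proj1_sig (constructive_indefinite_description _ (Hgeo p q))).
  assert (Hsg : forall p q, geod_seg d (sg p q) p q).
  { intros p q. unfold sg. destruct (constructive_indefinite_description _ (Hgeo p q)). auto. }
  destruct Hesc as [x Hx].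
  assert (Hgrow : forall M, exists N, forall n, (N <= n)%nat -> M <= d x (act (g n) x)).
  { intro M. destruct (Hx _ (Hprop x M)) as [N HN]. exists N. intros n Hn.
    specialize (HN n Hn). apply Rnot_lt_le. intro. apply HN. lra. }
  assert (Hinvd : forall h z, d z (act (inv h) z) = d z (act h z)).
  { intros h z. rewrite <- (Hiso h). rewrite AR. apply d_sym; auto. }
  destruct (limit_ray d HX Hprop sg Hsg x (fun n => act (g n) x) Hgrow)
    as [phi1 [xip [Hphi1 [Hxip [Hxip0 Hcv1]]]]].
  assert (Hgrow2 : forall M, exists N, forall n, (N <= n)%nat ->
            M <= d x (act (inv (g (phi1 n))) x)).
  { intro M. destruct (Hgrow M) as [N HN]. exists N. intros n Hn. rewrite Hinvd.
    apply HN. pose proof (sincr_ge _ Hphi1 n). lia. }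
  destruct (limit_ray d HX Hprop sg Hsg x (fun n => act (inv (g (phi1 n))) x) Hgrow2)
    as [phi2 [xim [Hphi2 [Hxim [Hxim0 Hcv2]]]]].
  set (sigma := fun n => phi1 (phi2 n)).
  assert (Hsig : sincr sigma) by exact (sincr_comp phi1 phi2 Hphi1 Hphi2).
  assert (Hsg_ge : forall n, (n <= sigma n)%nat) by (apply sincr_ge; auto).
  exists sigma, xim, xip. split; [apply Hsig|split; [auto|split; [auto|]]].
  intros xi Hxi Hvis Hna.
  destruct (Hvis xim Hxim (fun H => Hna (asym_sym d Hm _ _ H))) as [l [Hl [Hlp Hlm]]].
  intros x0 R eps HR He.
  destruct (Req_dec R 0) as [->|HR0].
  { exists 0%nat. intros n _ c c' _ Hc0 _ _ Hc'0 _. rewrite Hc0, Hc'0, d_refl; auto. }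
  destruct (classic (exists c0, geod_ray d c0 /\ c0 0 = x0 /\ asymptotic d c0 xip))
    as [[c0 [Hc0r [Hc00 Hc0a]]]|Hno].
  2:{ exists 0%nat. intros n _ c c' _ _ _ Hc' Hc'0 Hc'a. exfalso. apply Hno.
      exists c'; auto. }
  set (h := fun n => g (sigma n)).
  set (p := l 0).
  assert (BC1 := basechange d HX sg Hsg x x0 xip Hxip Hxip0
    (fun n => act (h n) x) (fun n => act (h n) p) (d x p)
    ltac:(intro n; cbv beta; rewrite Hiso; lra)
    ltac:(intro M; destruct (Hgrow M) as [N HN]; exists N; intros n Hn; apply HN;
          specialize (Hsg_ge n); unfold sigma in *; lia)
    ltac:(intros t Ht; exact (conv_sub d _ _ phi2 Hphi2 (Hcv1 t Ht)))
    c0 Hc0r Hc00 Hc0a (fun n => sg x0 (act (h n) p)) ltac:(intro; apply Hsg) R ltac:(lra)).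
  assert (Hl0 : (fun t => l (- t)) 0 = p) by (unfold p; simpl; rewrite Ropp_0; auto).
  assert (BC2 := basechange d HX sg Hsg x p xim Hxim Hxim0
    (fun n => act (inv (h n)) x) (fun n => act (inv (h n)) x0) (d x x0)
    ltac:(intro n; cbv beta; rewrite Hiso; lra)
    ltac:(intro M; destruct (Hgrow2 M) as [N HN]; exists N; intros n Hn; apply HN; pose proof (sincr_ge _ Hphi2 n); lia)
    Hcv2
    (fun t => l (- t)) (line_neg_ray d l Hl) Hl0 Hlm
    (fun n => sg p (act (inv (h n)) x0)) ltac:(intro; apply Hsg) 1 ltac:(lra)).
  cbv beta in BC1, BC2.
  set (eta := Rmin 1 (eps^2 / (32 * R^2))).
  assert (HR2 : 0 < R ^ 2) by nra.
  assert (Heta : 0 < eta /\ eta <= 1 /\ 2 * eta * R^2 <= (eps/4)^2).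
  { unfold eta. split; [|split].
    - apply Rmin_glb_lt. lra. apply Rmult_lt_0_compat. nra. apply Rinv_0_lt_compat. nra.
    - apply Rmin_l.
    - apply Rle_trans with (2 * (eps ^ 2 / (32 * R ^ 2)) * R^2).
      apply Rmult_le_compat_r. lra. apply Rmult_le_compat_l. lra. apply Rmin_r.
      right. field. lra. }
  destruct Heta as [Heta0 [Heta1 Heta2]].
  destruct (BC1 (eps/2) ltac:(lra)) as [N1 HN1].
  destruct (BC2 (eta/4) ltac:(lra)) as [N2 HN2].
  destruct (Hgrow2 (R + 1 + d x p + d x x0)) as [N3 HN3].
  exists (N1 + N2 + N3)%nat. intros n Hn c c' Hc Hc0' Hca Hc' Hc'0 Hc'a.
  cbv beta in Hca.
  assert (Ec : c' R = c0 R).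
  { apply (ray_unique d HX c' c0 Hc' Hc0r). rewrite Hc'0, Hc00; auto.
    apply (asym_trans d Hm c' xip c0 Hc'a). apply asym_sym; auto. lra. }
  rewrite Ec.
  specialize (HN1 n ltac:(lia)). specialize (HN2 n ltac:(lia)).
  specialize (HN3 (phi2 n) ltac:(pose proof (sincr_ge _ Hphi2 n); lia)).
  cbv beta in HN1, HN2.
  change (g (phi1 (phi2 n))) with (h n) in HN3. change (g (sigma n)) with (h n) in Hca.
  set (hn := h n) in *.
  set (y := act (inv hn) x0) in *.
  set (tau := sg x0 (act hn p)) in *.
  assert (Ha : R + 1 <= d p y).
  { pose proof (d_tri d Hm x p (act (inv hn) x)).
    pose proof (d_tri d Hm p y (act (inv hn) x)).
    assert (d y (act (inv hn) x) = d x0 x) by (unfold y; apply Hiso).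
    rewrite (d_sym d Hm x0 x) in H1. lra. }
  assert (Key : d (c R) (tau R) <= eps / 4).
  { set (rho := fun t => act (inv hn) (c t)).
    assert (Hrho : geod_ray d rho).
    { intros s t Hs Ht. unfold rho. rewrite Hiso. apply Hc; auto. }
    assert (Hrho0 : rho 0 = y) by (unfold rho, y; rewrite Hc0'; auto).
    destruct Hca as [B1 HB1]. destruct Hlp as [B2 HB2].
    set (B := B1 + B2).
    assert (HB : forall t, 0 <= t -> d (rho t) (l t) <= B).
    { intros t Ht. unfold rho, B.
      assert (d (act (inv hn) (c t)) (xi t) = d (c t) (act hn (xi t))).
      { rewrite <- (Hiso hn). rewrite AR. auto. }
      pose proof (d_tri d Hm (act (inv hn) (c t)) (xi t) (l t)).
      pose proof (HB1 t Ht). pose proof (HB2 t Ht). rewrite (d_sym d Hm (l t)) in H2. lra. }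
    pose proof (asym_bound_nonneg d Hm _ _ B HB) as HB0.
    set (tau' := fun t => act (inv hn) (tau t)).
    assert (Htau' : geod_seg d tau' y p).
    { pose proof (seg_iso d Hm tau x0 (act hn p) (act (inv hn)) (Hiso (inv hn)) (Hsg _ _)) as S.
      rewrite AL in S. exact S. }
    replace (d (c R) (tau R)) with (d (rho R) (tau' R)) by (unfold rho, tau'; apply Hiso).
    apply le_epsilon. intros e' He'.
    set (s := R + B + 2 + 2 * R * B / e').
    assert (Hs1 : 0 <= 2 * R * B / e').
    { apply Rmult_le_pos. nra. left; apply Rinv_0_lt_compat; lra. }
    set (gam := fun s => sg y (l s)).
    pose proof (ray_to_segs d HX rho y l B Hrho Hrho0 (line_ray d l Hl) HB gam
                  (fun s => Hsg y (l s)) R s ltac:(lra) ltac:(unfold s; lra)) as U.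
    assert (U' : d (rho R) (gam s R) <= e').
    { eapply Rle_trans. apply U.
      apply Rmult_le_reg_r with s. unfold s; lra.
      replace (2 * (R / s) * B * s) with (2 * R * B) by (field; unfold s; lra).
      assert (2 * R * B / e' * e' = 2 * R * B) by (field; lra).
      unfold s. nra. }
    pose proof (gromov d HX l Hl y (sg p y) (Hsg p y) 1 s ltac:(lra) ltac:(fold p; lra)
                  ltac:(unfold s; lra)) as Gr.
    fold p in Gr.
    destruct (line_seg d Hm l s Hl ltac:(unfold s; lra)) as [_ Dls]. fold p in Dls.
    set (a := d p y) in *.
    assert (Hdel : 4 * a * d (sg p y 1) (l (Ropp 1)) / 1 <= eta * a).
    { replace (4 * a * d (sg p y 1) (l (Ropp 1)) / 1) with (4 * d (sg p y 1) (l (Ropp 1)) * a) by field.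
      apply Rmult_le_compat_r; lra. }
    assert (Hb : a + s - eta * a <= d y (l s)) by lra.
    assert (Heta_a : eta * a <= a) by nra.
    idtac.
    pose proof (final_cmp d HX y p (l s) tau' (gam s) R eta Htau' (Hsg y (l s))) as F.
    rewrite (d_sym d Hm y p) in F. fold a in F. rewrite Dls in F.
    specialize (F ltac:(lra) ltac:(unfold s in *; lra) ltac:(lra) ltac:(unfold s in *; lra)
                  ltac:(lra) Hb).
    assert (F' : d (tau' R) (gam s R) <= eps / 4).
    { apply sq_le. lra. lra. }
    pose proof (d_tri d Hm (rho R) (gam s R) (tau' R)).
    rewrite (d_sym d Hm (gam s R) (tau' R)) in H. lra. }
  pose proof (d_tri d Hm (c R) (tau R) (c0 R)). lra.
Qed.
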